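(* Let $\{\mathbb{G}_n,\ n=2,3,\ldots\}$ be a sequence of random graphs as described in the context, with $\lim_{n\to\infty}|V_n|=\infty$, satisfying: (A) for each $n$, $D_{n,k}$ has the same distribution as $D_{n,1}$ for all $k\in V_n$, and for all distinct $k,\ell\in V_n$, $(D_{n,k},D_{n,\ell})$ has the same joint distribution as $(D_{n,1},D_{n,2})$; (B) there is an $\mathbb{N}$-valued random variable $D$ with pmf $p=(p(d),\ d=0,1,\ldots)$ such that $D_{n,1}\to D$ in distribution as $n\to\infty$; (C) for each $d=0,1,\ldots$, $\lim_{n\to\infty}\mathrm{Cov}\big[\mathbf{1}[D_{n,1}=d],\mathbf{1}[D_{n,2}=d]\big]=0$. Then for every $d=0,1,\ldots$, $P_n(d)\to p(d)$ in probability as $n\to\infty$.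
   Context: All random variables are defined on a common probability space $(\Omega,\mathcal{F},\mathbb{P})$. For each $n=2,3,\ldots$, $\mathbb{G}_n$ is a random (possibly directed, self-loops allowed) graph on the deterministic finite node set $V_n=\{1,\ldots,k_n\}$ with $k_n\ge 2$, determined by $\{0,1\}$-valued edge random variables $\{\chi_n(k,\ell),\ k,\ell\in V_n\}$ ($\chi_n(k,\ell)=1$ iff there is an edge from $k$ to $\ell$). The degree of node $k$ is $D_{n,k}=\sum_{\ell\in V_n}\chi_n(k,\ell)$. For $d=0,1,\ldots$, $N_n(d)=\sum_{k\in V_n}\mathbf{1}[D_{n,k}=d]$ and $P_n(d)=N_n(d)/|V_n|$ is the fraction of nodes with degree $d$. $\mathbb{N}=\{0,1,2,\ldots\}$. *)

(* Defs.v *)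
From HB Require Import structures.
From mathcomp Require Import all_boot all_order all_algebra.
From mathcomp Require Import all_classical all_reals all_analysis.
Set Implicit Arguments. Unset Strict Implicit. Unset Printing Implicit Defensive.
Import Order.TTheory GRing.Theory Num.Theory.
Import numFieldNormedType.Exports.
Local Open Scope classical_set_scope.
Local Open Scope ring_scope.

(* Random graphs: for each n, node set V_n = {0, ..., kn n - 1} (node "1" of
   the paper is 0, node "2" is 1), edge indicator chi n k l : T -> bool. *)

Definition degree (T : Type) (kn : nat -> nat) (chi : nat -> nat -> nat -> T -> bool)
  (n i : nat) (w : T) : nat := (\sum_(l < kn n) chi n i l w)%N.

Definition Ncount (T : Type) (kn : nat -> nat) (chi : nat -> nat -> nat -> T -> bool)
  (n d : nat) (w : T) : nat := (\sum_(i < kn n) (degree kn chi n i w == d))%N.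

Definition Pfrac (R : realType) (T : Type) (kn : nat -> nat)
  (chi : nat -> nat -> nat -> T -> bool) (n d : nat) (w : T) : R :=
  (Ncount kn chi n d w)%:R / (kn n)%:R.

Definition cdf_nat d (T : measurableType d) (R : realType) (P : probability T R)
  (X : T -> nat) (x : R) : \bar R := P [set w | (X w)%:R <= x].

Definition cvg_in_distribution_nat d (T : measurableType d) (R : realType)
  (P : probability T R) (X_ : nat -> T -> nat) (X : T -> nat) : Prop :=
  forall x : R, {for x, continuous (cdf_nat P X)} ->
    cdf_nat P (X_ n) x @[n --> \oo] --> cdf_nat P X x.

Definition cvg_in_probability d (T : measurableType d) (R : realType)
  (P : probability T R) (Y_ : nat -> T -> R) (c : R) : Prop :=
  forall eps : R, 0 < eps ->
    P [set w | eps <= `|Y_ n w - c|] @[n --> \oo] --> 0%E.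

(* Main.v *)
Require Import Defs.
From HB Require Import structures.
From mathcomp Require Import all_boot all_order all_algebra.
From mathcomp Require Import all_classical all_reals all_analysis.
From mathcomp Require Import ring lra.
Import Order.TTheory GRing.Theory Num.Theory.
Import numFieldNormedType.Exports.
Local Open Scope classical_set_scope.
Local Open Scope ring_scope.
Lemma deg_mfun (dT : measure_display) (T : measurableType dT) (R : realType)
  (kn : nat -> nat) (chi : nat -> nat -> nat -> T -> bool)
  (Hchi : forall n i l, (2 <= n)%N -> (i < kn n)%N -> (l < kn n)%N ->
     measurable [set w | chi n i l w]) n i :
  (2 <= n)%N -> (i < kn n)%N ->
  measurable_fun setT (fun w => ((degree kn chi n i w)%:R : R)).
Proof.
move=> n2 ikn.
rewrite /degree.
have -> : (fun w => ((\sum_(l < kn n) chi n i l w)%N%:R : R)) =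
   (fun w => \sum_(l < kn n) (\1_[set w | chi n i l w] w : R)).
  apply/funext => w; rewrite natr_sum; apply: eq_bigr => l _.
  rewrite indicE; case: (boolP (chi n i l w)) => h.
  by rewrite mem_set.
  by rewrite memNset //; apply/negP.
apply: measurable_sum => l.
by apply: measurable_realfun.measurable_indic; apply: Hchi.
Qed.

Lemma deg_meas_eq (dT : measure_display) (T : measurableType dT) (R : realType)
  (kn : nat -> nat) (chi : nat -> nat -> nat -> T -> bool)
  (Hchi : forall n i l, (2 <= n)%N -> (i < kn n)%N -> (l < kn n)%N ->
     measurable [set w | chi n i l w]) n i d :
  (2 <= n)%N -> (i < kn n)%N ->
  measurable [set w | degree kn chi n i w = d].
Proof.
move=> n2 ikn.
have := @deg_mfun _ _ R _ _ Hchi n i n2 ikn measurableT [set (d%:R : R)] (measurable_set1 _).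
rewrite setTI; congr measurable; apply/seteqP; split => w /=.
  by move/eqP; rewrite eqr_nat => /eqP.
by move=> ->.
Qed.

Lemma deg_meas_le (dT : measure_display) (T : measurableType dT) (R : realType)
  (kn : nat -> nat) (chi : nat -> nat -> nat -> T -> bool)
  (Hchi : forall n i l, (2 <= n)%N -> (i < kn n)%N -> (l < kn n)%N ->
     measurable [set w | chi n i l w]) n i (x : R) :
  (2 <= n)%N -> (i < kn n)%N ->
  measurable [set w | ((degree kn chi n i w)%:R : R) <= x].
Proof.
move=> n2 ikn.
have := @deg_mfun _ _ R _ _ Hchi n i n2 ikn measurableT _ (measurable_itv `]-oo, x]).
rewrite setTI; congr measurable; apply/seteqP; split => w /=;
  by rewrite in_itv /=.
Qed.
Lemma le_half (R : realType) (m d : nat) (y : R) :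
  `|y - (d%:R + 2^-1)| < 2^-1 -> (m%:R <= y) = (m <= d)%N.
Proof.
move=> hy.
have h2 : (0:R) < 2^-1 by rewrite invr_gt0.
have [hle|hlt] := leqP m d.
  have : (m%:R : R) <= d%:R by rewrite ler_nat.
  move: hy; rewrite ltr_norml => /andP[h1 h3] hmd.
  apply/idP; lra.
have : (d.+1%:R : R) <= m%:R by rewrite ler_nat.
rewrite -addn1 natrD.
move: hy; rewrite ltr_norml => /andP[h1 h3] hmd.
have hh : (2^-1 : R) + 2^-1 = 1 by field.
apply/negbTE; rewrite -ltNge; lra.
Qed.

Lemma lt_half (R : realType) (m d : nat) (y : R) :
  `|y - (d%:R - 2^-1)| < 2^-1 -> (m%:R <= y) = (m < d)%N.
Proof.
move=> hy.
case: d hy => [|d] hy.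
  have h2 : (0:R) < 2^-1 by rewrite invr_gt0.
  move: hy; rewrite ltr_norml => /andP[h1 h3].
  have : (0:R) <= m%:R by [].
  move=> h; apply/negbTE; rewrite -ltNge; lra.
rewrite ltnS -(@le_half R m d y) //.
have hh : (2^-1 : R) + 2^-1 = 1 by field.
move: hy; rewrite -addn1 natrD.
by have -> : y - (d%:R + 1 - 2^-1) = y - (d%:R + 2^-1) by lra.
Qed.

Lemma meas_lt (dT : measure_display) (T : measurableType dT) (X : T -> nat) :
  (forall m, measurable [set w | X w = m]) ->
  forall k, measurable [set w | (X w < k)%N].
Proof.
move=> hX; elim => [|k IH].
  by have -> : [set w | (X w < 0)%N] = set0 by apply/seteqP; split => w //=.
have -> : [set w | (X w < k.+1)%N] = [set w | (X w < k)%N] `|` [set w | X w = k].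
  apply/seteqP; split => w /=.
    by rewrite ltnS leq_eqVlt => /orP[/eqP ->|h]; [right|left].
  by case => [h|->]; [apply: ltnW|].
exact: measurableU.
Qed.

Lemma split_cdf (dT : measure_display) (T : measurableType dT) (R : realType)
  (P : probability T R) (X : T -> nat) (k : nat) :
  (forall m, measurable [set w | X w = m]) ->
  fine (P [set w | X w = k]) =
  fine (cdf_nat P X (k%:R + 2^-1)) - fine (cdf_nat P X (k%:R - 2^-1)).
Proof.
move=> hX.
have h0 : `|(k%:R + 2^-1 : R) - (k%:R + 2^-1)| < 2^-1 by rewrite subrr normr0 invr_gt0.
have h1 : `|(k%:R - 2^-1 : R) - (k%:R - 2^-1)| < 2^-1 by rewrite subrr normr0 invr_gt0.
rewrite /cdf_nat.
have -> : [set w | ((X w)%:R : R) <= k%:R + 2^-1] = [set w | (X w < k)%N] `|` [set w | X w = k].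
  apply/seteqP; split => w /=.
    by rewrite (@le_half R (X w) k _ h0) leq_eqVlt => /orP[/eqP ->|h]; [right|left].
  by rewrite (@le_half R (X w) k _ h0); case => [h|->]; [apply: ltnW|].
have -> : [set w | ((X w)%:R : R) <= k%:R - 2^-1] = [set w | (X w < k)%N].
  by apply/seteqP; split => w /=; rewrite (@lt_half R (X w) k _ h1).
have mA := @meas_lt _ _ X hX k.
have mB := hX k.
rewrite measureU //; last first.
  by apply/seteqP; split => w //= [h1' h2']; move: h1'; rewrite h2' ltnn.
rewrite fineD ?fin_num_measure //.
by rewrite [X in X - _]addrC addrK.
Qed.
Lemma cdf_cont (dT : measure_display) (T : measurableType dT) (R : realType)
  (P : probability T R) (X : T -> nat) (x : R) (b : nat -> bool) :
  (forall m (y : R), `|y - x| < 2^-1 -> (m%:R <= y) = b m) ->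
  {for x, continuous (cdf_nat P X)}.
Proof.
move=> hb.
apply: (near_cst_continuous (cdf_nat P X x)).
apply/nbhs_ballP; exists (2^-1) => /=; first by rewrite invr_gt0.
move=> y; rewrite /ball /= => hy.
rewrite /cdf_nat; congr (P _); apply/seteqP; split => w /=.
  by rewrite hb; [rewrite hb // subrr normr0 invr_gt0 | rewrite distrC].
by rewrite hb; [rewrite hb // distrC | rewrite subrr normr0 invr_gt0].
Qed.

Lemma cdf_plus (dT : measure_display) (T : measurableType dT) (R : realType)
  (P : probability T R) (X : T -> nat) (k : nat) :
  cdf_nat P X (k%:R + 2^-1) = P [set w | (X w < k.+1)%N].
Proof.
have h0 : `|(k%:R + 2^-1 : R) - (k%:R + 2^-1)| < 2^-1 by rewrite subrr normr0 invr_gt0.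
by rewrite /cdf_nat; congr (P _); apply/seteqP; split => w /=; rewrite (@le_half R (X w) k _ h0).
Qed.

Lemma cdf_minus (dT : measure_display) (T : measurableType dT) (R : realType)
  (P : probability T R) (X : T -> nat) (k : nat) :
  cdf_nat P X (k%:R - 2^-1) = P [set w | (X w < k)%N].
Proof.
have h0 : `|(k%:R - 2^-1 : R) - (k%:R - 2^-1)| < 2^-1 by rewrite subrr normr0 invr_gt0.
by rewrite /cdf_nat; congr (P _); apply/seteqP; split => w /=; rewrite (@lt_half R (X w) k _ h0).
Qed.

Lemma fine_cvg_lt (dT : measure_display) (T : measurableType dT) (R : realType)
  (P : probability T R) (Xn : nat -> T -> nat) (X : T -> nat) (k : nat) :
  (forall m, measurable [set w | X w = m]) ->
  P [set w | (Xn n w < k)%N] @[n --> \oo] --> P [set w | (X w < k)%N] ->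
  fine (P [set w | (Xn n w < k)%N]) @[n --> \oo] --> fine (P [set w | (X w < k)%N]).
Proof.
move=> hX h.
apply: fine_cvg.
by rewrite fineK // fin_num_measure //; apply: meas_lt.
Qed.

Lemma a_cvg (dT : measure_display) (T : measurableType dT) (R : realType)
  (P : probability T R) (Xn : nat -> T -> nat) (X : T -> nat) (k : nat) :
  (forall n, (2 <= n)%N -> forall m, measurable [set w | Xn n w = m]) ->
  (forall m, measurable [set w | X w = m]) ->
  cvg_in_distribution_nat P Xn X ->
  fine (P [set w | Xn n w = k]) @[n --> \oo] --> fine (P [set w | X w = k]).
Proof.
move=> hXn hX hB.
have hp : {for (k%:R + 2^-1 : R), continuous (cdf_nat P X)}.
  apply: (@cdf_cont _ _ _ _ _ _ (fun m => (m <= k)%N)) => m y hy.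
  exact: le_half.
have hm : {for (k%:R - 2^-1 : R), continuous (cdf_nat P X)}.
  apply: (@cdf_cont _ _ _ _ _ _ (fun m => (m < k)%N)) => m y hy.
  exact: lt_half.
have cp := hB _ hp.
have cm := hB _ hm.
rewrite (@cdf_plus _ _ _ P X k) in cp; rewrite (@cdf_minus _ _ _ P X k) in cm.
have cp2 : P [set w | (Xn n w < k.+1)%N] @[n --> \oo] --> P [set w | (X w < k.+1)%N].
  rewrite (@eq_cvg _ _ _ (fun n => P [set w | (Xn n w < k.+1)%N]) (fun n => cdf_nat P (Xn n) (k%:R + 2^-1))) //.
  by move=> n; rewrite cdf_plus.
have cm2 : P [set w | (Xn n w < k)%N] @[n --> \oo] --> P [set w | (X w < k)%N].
  rewrite (@eq_cvg _ _ _ (fun n => P [set w | (Xn n w < k)%N]) (fun n => cdf_nat P (Xn n) (k%:R - 2^-1))) //.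
  by move=> n; rewrite cdf_minus.
have cp' := @fine_cvg_lt _ _ _ P Xn X k.+1 hX cp2.
have cm' := @fine_cvg_lt _ _ _ P Xn X k hX cm2.
have := cvgB cp' cm'.
have e := @split_cdf _ _ _ P X k hX; rewrite cdf_plus cdf_minus in e.
rewrite e => h; apply: (cvg_trans _ (h _)).
apply: near_eq_cvg; near=> n => /=.
have e2 := @split_cdf _ _ _ P (Xn n) k (hXn n _); rewrite cdf_plus cdf_minus in e2.
rewrite e2 //.
near: n; exact: nbhs_infty_ge.
Unshelve. all: by end_near.
Qed.
Lemma indic_Lfun (dT : measure_display) (T : measurableType dT) (R : realType)
  (P : probability T R) (A : set T) : measurable A -> (\1_A : T -> R) \in Lfun P 1.
Proof. by move=> mA; apply/Lfun1_integrable; exact: integrable_indic. Qed.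

Lemma E_sum (dT : measure_display) (T : measurableType dT) (R : realType)
  (P : probability T R) k (F : 'I_k -> T -> R) :
  (forall i, F i \in Lfun P 1) ->
  ('E_P[\sum_(i < k) F i] = \sum_(i < k) 'E_P[F i])%E.
Proof.
elim: k F => [|k IH] F hF.
  by rewrite !big_ord0 (_ : 0 = cst 0) ?expectation_cst.
rewrite !big_ord_recr /= expectationD; last 2 first.
- by apply: rpred_sum => i _; exact: hF.
- exact: hF.
by rewrite IH.
Qed.

Lemma markov_g (dT : measure_display) (T : measurableType dT) (R : realType)
  (P : probability T R) (g : T -> R) (t : R) :
  g \in Lfun P 1 -> (forall w, 0 <= g w) -> 0 < t ->
  (P [set w | (t <= g w)%R] <= (t^-1)%:E * 'E_P[g])%E.
Proof.
move=> hg g0 t0.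
have mg : measurable_fun setT g.
  by move: hg; rewrite inE => /andP[/[!inE]/= mf _].
have mB : measurable [set w | t <= g w].
  have := mg measurableT _ (measurable_itv `[t, +oo[).
  rewrite setTI; congr measurable; apply/seteqP; split => w /=;
    by rewrite in_itv /= andbT.
rewrite -expectation_indic // -expectationZl //.
apply: expectation_le => //.
- by apply: measurable_realfun.measurable_funM.
- by move=> w /=; rewrite mulr_ge0 // invr_ge0 ltW.
apply/aeW => w /=; rewrite indicE.
case: (boolP (w \in [set w | t <= g w])) => h /=.
  rewrite inE /= in h.
  by rewrite ler_pdivlMr // mul1r.
by rewrite divr_ge0 // ltW.
Qed.
Lemma inner_sum (R : realType) k (i : 'I_k) (a b : R) :
  \sum_(j < k) (if i == j then a else b) = a + (k%:R - 1) * b.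
Proof.
rewrite (bigD1 i) //= eqxx.
have -> : \sum_(j < k | j != i) (if i == j then a else b) = \sum_(j < k | j != i) b.
  by apply: eq_bigr => j; rewrite eq_sym => /negbTE ->.
have e1 : \sum_(j < k) b = b + \sum_(j < k | j != i) b := bigD1 _ _.
have e2 : \sum_(j < k) b = k%:R * b by rewrite sumr_const card_ord mulr_natl.
have -> : \sum_(j < k | j != i) b = k%:R * b - b by rewrite -e2 e1; ring.
by rewrite mulrBl mul1r.
Qed.

Lemma E_sq (dT : measure_display) (T : measurableType dT) (R : realType)
  (P : probability T R) (k : nat) (A : nat -> set T) (a b c : R) :
  (0 < k)%N -> (forall i, (i < k)%N -> measurable (A i)) ->
  (forall i, (i < k)%N -> P (A i) = a%:E) ->
  (forall i j, (i < k)%N -> (j < k)%N -> i <> j -> P (A i `&` A j) = b%:E) ->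
  (fun w => ((\sum_(i < k) \1_(A i) w) / k%:R - c) ^+ 2) \in Lfun P 1 /\
  ('E_P[(fun w => ((\sum_(i < k) \1_(A i) w) / k%:R - c) ^+ 2)%R] =
     (k%:R^-1 * a + (1 - k%:R^-1) * b - 2 * c * a + c ^+ 2)%:E)%E.
Proof.
move=> k0 mA PA PAB.
set ki := k%:R^-1.
have eqg : (fun w => ((\sum_(i < k) \1_(A i) w) / k%:R - c) ^+ 2) =
   ki ^+ 2 \o* (\sum_(i < k) \sum_(j < k) \1_(A i `&` A j))
   \+ (- (2 * c * ki)) \o* (\sum_(i < k) \1_(A i)) \+ cst (c ^+ 2).
  apply/funext => w /=.
  rewrite !fct_sumE.
  have hs : forall i : 'I_k, (\sum_(j < k) (\1_(A i `&` A j) : T -> R)) w = \sum_(j < k) \1_(A i) w * \1_(A j) w.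
    by move=> i; rewrite fct_sumE; apply: eq_bigr => j _; rewrite indicI.
  rewrite (eq_bigr _ (fun i _ => hs i)) -big_distrlr /= -expr2.
  set S := \sum_(i < k) _.
  rewrite /ki; ring.
have L1 : forall i : 'I_k, (\1_(A i) : T -> R) \in Lfun P 1.
  by move=> i; apply: indic_Lfun; apply: mA.
have L2 : forall i j : 'I_k, (\1_(A i `&` A j) : T -> R) \in Lfun P 1.
  by move=> i j; apply: indic_Lfun; apply: measurableI; apply: mA.
have LS1 : (\sum_(i < k) \1_(A i) : T -> R) \in Lfun P 1.
  by apply: rpred_sum => i _.
have LS2 : (\sum_(i < k) \sum_(j < k) \1_(A i `&` A j) : T -> R) \in Lfun P 1.
  by apply: rpred_sum => i _; apply: rpred_sum => j _.
rewrite eqg; split.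
  apply: rpredD; first apply: rpredD.
  - exact: Lfun_scale.
  - exact: Lfun_scale.
  - exact: Lfun_cst.
rewrite expectationD; last 2 first.
- by apply: rpredD; apply: Lfun_scale.
- exact: Lfun_cst.
rewrite expectationD; last 2 first.
- exact: Lfun_scale.
- exact: Lfun_scale.
rewrite expectation_cst !expectationZl //.
rewrite !E_sum //; last first.
  by move=> i; apply: rpred_sum.
have e1 : (\sum_(i < k) 'E_P[\1_(A i)] = (k%:R * a)%:E)%E.
  rewrite (eq_bigr (fun _ => a%:E)); last first.
    by move=> i _; rewrite expectation_indic ?PA //; apply: mA.
  by rewrite sumEFin sumr_const card_ord mulr_natl.
have e2 : (\sum_(i < k) 'E_P[\sum_(j < k) \1_(A i `&` A j)] =
     (k%:R * (a + (k%:R - 1) * b))%:E)%E.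
  rewrite (eq_bigr (fun _ => (a + (k%:R - 1) * b)%:E)); last first.
    move=> i _; rewrite E_sum //.
    rewrite (eq_bigr (fun j => (if i == j then a else b)%:E)); last first.
      move=> j _; rewrite expectation_indic; last by apply: measurableI; apply: mA.
      case: (eqVneq i j) => [<-|hij]; first by rewrite setIid PA.
      apply: PAB => //; move=> hv; move/eqP: hij; apply; exact: val_inj.
    by rewrite sumEFin inner_sum.
  by rewrite sumEFin sumr_const card_ord mulr_natl.
rewrite e1 e2 -!EFinM -!EFinD; congr EFin.
have kn0 : (k%:R : R) != 0 by rewrite pnatr_eq0 -lt0n.
rewrite /ki; field.
exact: kn0.
Qed.
Theorem proposition2 (dT : measure_display) (T : measurableType dT)
  (R : realType) (P : probability T R)
  (kn : nat -> nat) (chi : nat -> nat -> nat -> T -> bool) (D : T -> nat)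
  (Hkn : forall n, (2 <= n)%N -> (2 <= kn n)%N)
  (Hchi : forall n i l, (2 <= n)%N -> (i < kn n)%N -> (l < kn n)%N ->
     measurable [set w | chi n i l w])
  (HD : forall d, measurable [set w | D w = d])
  (Hinf : ((kn n)%:R : R) @[n --> \oo] --> +oo)
  (HA1 : forall n, (2 <= n)%N -> forall i, (i < kn n)%N -> forall d,
     P [set w | degree kn chi n i w = d] = P [set w | degree kn chi n 0 w = d])
  (HA2 : forall n, (2 <= n)%N -> forall i j, (i < kn n)%N -> (j < kn n)%N ->
     i <> j -> forall d1 d2,
     P [set w | degree kn chi n i w = d1 /\ degree kn chi n j w = d2] =
     P [set w | degree kn chi n 0 w = d1 /\ degree kn chi n 1 w = d2])
  (HB : cvg_in_distribution_nat P (fun n => degree kn chi n 0) D)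
  (HC : forall d : nat,
     covariance P (fun w => ((degree kn chi n 0 w == d)%:R : R))
                  (fun w => ((degree kn chi n 1 w == d)%:R : R)) @[n --> \oo]
       --> 0%E) :
  forall d : nat,
    cvg_in_probability P (fun n => Pfrac R kn chi n d)
      (fine (P [set w | D w = d])).
Proof.
move=> d eps eps0.
set c := fine (P [set w | D w = d]).
pose A n i := [set w | degree kn chi n i w = d].
pose a n := fine (P (A n 0%N)).
pose b n := fine (P (A n 0%N `&` A n 1%N)).
pose ki n := ((kn n)%:R : R)^-1.
pose r n := ki n * a n + (1 - ki n) * b n - 2 * c * a n + c ^+ 2.
have mA : forall n i, (2 <= n)%N -> (i < kn n)%N -> measurable (A n i).
  by move=> n i n2 ikn; apply: (@deg_meas_eq _ _ R _ _ Hchi).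
have k0 : forall n, (2 <= n)%N -> (0 < kn n)%N.
  by move=> n /Hkn; apply: leq_trans.
have k1 : forall n, (2 <= n)%N -> (1 < kn n)%N.
  by move=> n /Hkn.
have ha : a n @[n --> \oo] --> c.
  apply: (@a_cvg _ _ _ P (fun n => degree kn chi n 0) D d _ HD HB).
  by move=> n n2 m; apply: (@deg_meas_eq _ _ R _ _ Hchi) => //; apply: k0.
have hki : ki n @[n --> \oo] --> 0.
  apply/gtr0_cvgV0 => //.
  near=> n; rewrite ltr0n; apply: k0.
  near: n; exact: nbhs_infty_ge.
have eI : forall n i, (fun w => ((degree kn chi n i w == d)%:R : R)) = \1_(A n i).
  move=> n i; apply/funext => w; rewrite indicE.
  case: (eqVneq (degree kn chi n i w) d) => h; first by rewrite mem_set.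
  by rewrite memNset //= => /eqP; rewrite (negbTE h).
have hcov : (b n - a n ^+ 2) @[n --> \oo] --> 0.
  have := HC d.
  have -> : (0%E : \bar R) = (0 : R)%:E by [].
  move=> /fine_cvg h; apply: (cvg_trans _ h).
  apply: near_eq_cvg; near=> n => /=.
  have n2 : (2 <= n)%N by near: n; exact: nbhs_infty_ge.
  have mA0 : measurable (A n 0%N) by apply: mA => //; apply: k0.
  have mA1 : measurable (A n 1%N) by apply: mA => //; apply: k1.
  have mA01 : measurable (A n 0%N `&` A n 1%N) by apply: measurableI.
  have e01 : (\1_(A n 0%N) * \1_(A n 1%N) : T -> R) = \1_(A n 0%N `&` A n 1%N).
    by apply/funext => w; rewrite indicI.
  rewrite !eI covarianceE; last 3 first.
  - exact: indic_Lfun.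
  - exact: indic_Lfun.
  - rewrite e01; exact: indic_Lfun.
  rewrite e01 !expectation_indic //.
  have -> : P (A n 1%N) = P (A n 0%N) by rewrite /A HA1 //; apply: k1.
  rewrite -(fineK (fin_num_measure P _ mA0)) -(fineK (fin_num_measure P _ mA01)).
  by rewrite -EFinM -EFinB /= -/(a n) -/(b n) expr2.
have hb : b n @[n --> \oo] --> c ^+ 2.
  have h : (b n - a n ^+ 2) + a n * a n @[n --> \oo] --> 0 + c * c.
    by apply: cvgD => //; apply: cvgM.
  have -> : c ^+ 2 = 0 + c * c by rewrite add0r expr2.
  apply: (cvg_trans _ h).
  apply: near_eq_cvg; near=> n => /=.
  by rewrite expr2 subrK.
have hr : r n @[n --> \oo] --> 0.
  have h : r n @[n --> \oo] --> 0 * c + (1 - 0) * c ^+ 2 - 2 * c * c + c ^+ 2.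
    apply: cvgD; last exact: cvg_cst.
    apply: cvgB; last by apply: cvgM => //; exact: cvg_cst.
    apply: cvgD; first by apply: cvgM.
    apply: cvgM => //; apply: cvgB => //; exact: cvg_cst.
  have -> : (0 : R) = 0 * c + (1 - 0) * c ^+ 2 - 2 * c * c + c ^+ 2 by ring.
  exact: h.
have bnd : forall n, (2 <= n)%N ->
    (P [set w | (eps <= `|Pfrac R kn chi n d w - c|)%R] <= ((eps ^+ 2)^-1 * r n)%:E)%E.
  move=> n n2.
  have hP : forall w, Pfrac R kn chi n d w =
      (\sum_(i < kn n) \1_(A n i) w) / (kn n)%:R.
    move=> w; rewrite /Pfrac /Ncount natr_sum; congr (_ / _); apply: eq_bigr => i _.
    exact: (congr1 (fun f => f w) (eI n i)).
  have mAn : forall i, (i < kn n)%N -> measurable (A n i).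
    by move=> i; apply: mA.
  have PAn : forall i, (i < kn n)%N -> P (A n i) = (a n)%:E.
    move=> i hi; rewrite /A HA1 // -/(A n 0%N) fineK // fin_num_measure //.
    by apply: mA => //; apply: k0.
  have PABn : forall i j, (i < kn n)%N -> (j < kn n)%N -> i <> j ->
      P (A n i `&` A n j) = (b n)%:E.
    move=> i j hi hj hij.
    transitivity (P (A n 0%N `&` A n 1%N)); first exact: HA2.
    rewrite fineK // fin_num_measure //.
    by apply: measurableI; apply: mA => //; [apply: k0 | apply: k1].
  have [Lg Eg] := @E_sq _ _ _ P (kn n) (A n) (a n) (b n) c (k0 n n2) mAn PAn PABn.
  have g0 : forall w, 0 <= ((\sum_(i < kn n) \1_(A n i) w) / (kn n)%:R - c) ^+ 2.
    by move=> w; apply: sqr_ge0.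
  have e2 : 0 < eps ^+ 2 by apply: exprn_gt0.
  have mk := @markov_g _ _ _ P _ (eps ^+ 2) Lg g0 e2.
  rewrite Eg -EFinM in mk.
  have -> : [set w | (eps <= `|Pfrac R kn chi n d w - c|)%R] =
      [set w | (eps ^+ 2 <= ((\sum_(i < kn n) \1_(A n i) w) / (kn n)%:R - c) ^+ 2)%R].
    have key : forall x : R, (eps <= `|x|) = (eps ^+ 2 <= x ^+ 2).
      move=> x; rewrite -[in RHS](real_normK (num_real x)) ler_sqr // nnegrE ?ltW //.
    by apply/seteqP; split => w /=; rewrite hP key.
  exact: mk.
have -> : (0 : \bar R) = (0 : R)%:E by [].
apply: cvg_EFin.
  near=> n; rewrite ge0_fin_numE ?measure_ge0 //.
  apply: (le_lt_trans (bnd n _)); last exact: ltry.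
  near: n; exact: nbhs_infty_ge.
apply: (@squeeze_cvgr _ _ _ _ (fun=> 0) (fun n => (eps ^+ 2)^-1 * r n)).
- near=> n; apply/andP; split.
    by apply: fine_ge0; apply: measure_ge0.
  have n2 : (2 <= n)%N by near: n; exact: nbhs_infty_ge.
  have hf : P [set w | (eps <= `|Pfrac R kn chi n d w - c|)%R] \is a fin_num.
    by rewrite ge0_fin_numE ?measure_ge0 //; apply: (le_lt_trans (bnd n n2)); exact: ltry.
  by rewrite -lee_fin /= fineK //; apply: bnd.
- exact: cvg_cst.
- have -> : (0 : R) = (eps ^+ 2)^-1 * 0 by rewrite mulr0.
  by apply: cvgM => //; exact: cvg_cst.
Unshelve. all: by end_near.
Qed.
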